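(* Let $a,b,q$ be complex numbers with $|q|<1$, $b\neq0$, and let $G(z)=\sum_{n=0}^{\infty}t_nz^n\in\mathbb{C}[[z]]$. Define, for parameters $\alpha,\beta$, $$\widetilde{G}(z;\alpha,\beta):=\sum_{n=0}^\infty t_n z^n\frac{(\alpha z;q)_n}{(\beta z;q)_n}.$$ Then, as formal power series in $z$, $$\frac{(az;q)_\infty}{(bz;q)_\infty}G(z)=\sum_{n=0}^{\infty}\frac{(aq/b;q)_n(az;q)_n}{(q;q)_n(bz;q)_n}(bz)^nq^{n(n-1)}\Big(\widetilde{G}(zq^n;a,b)-azq^{2n}\,\widetilde{G}(zq^{n+1};a/q,b/q)\Big).$$
   Context: $(x;q)_\infty=\prod_{j\ge0}(1-xq^j)$ and $(x;q)_n=\prod_{j=0}^{n-1}(1-xq^j)$ for integers $n\ge0$; products and quotients of these with arguments multiples of $z$ are regarded as formal power series in $z$. *)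

(* Defs.v *)
From HB Require Import structures.
From mathcomp Require Import all_boot all_order all_algebra.
From mathcomp Require Import complex.
From mathcomp Require Import all_classical all_reals topology normedtype sequences.
Set Implicit Arguments. Unset Strict Implicit. Unset Printing Implicit Defensive.
Import Order.TTheory GRing.Theory Num.Theory.
Import numFieldNormedType.Exports.
Local Open Scope ring_scope.

(* Formal power series over a field C, given by their coefficient sequence:
   f k is the coefficient of z^k. *)
Definition fps (C : Type) := nat -> C.

Section FPS.
Variable C : numFieldType.

Definition fps_const (c : C) : fps C := fun k => if k == 0%N then c else 0.
Definition fps_Xn (n : nat) : fps C := fun k => if k == n then 1 else 0.
Definition fps_add (f g : fps C) : fps C := fun k => f k + g k.
Definition fps_sub (f g : fps C) : fps C := fun k => f k - g k.
Definition fps_scale (c : C) (f : fps C) : fps C := fun k => c * f k.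
Definition fps_mul (f g : fps C) : fps C :=
  fun k => \sum_(i < k.+1) f i * g (k - i)%N.
(* substitution z |-> c z *)
Definition fps_subst (c : C) (f : fps C) : fps C := fun k => c ^+ k * f k.

Fixpoint fps_inv_aux (f : fps C) (n : nat) : seq C :=
  match n with
  | 0%N => [:: (f 0%N)^-1]
  | n'.+1 => let s := fps_inv_aux f n' in
      rcons s (- (f 0%N)^-1 * \sum_(i < n'.+1) f i.+1 * nth 0 s (n' - i)%N)
  end.
Definition fps_inv (f : fps C) : fps C := fun k => nth 0 (fps_inv_aux f k) k.
Definition fps_div (f g : fps C) : fps C := fps_mul f (fps_inv g).

Definition fps_prod (n : nat) (F : nat -> fps C) : fps C :=
  foldr (fun j acc => fps_mul (F j) acc) (fps_const 1) (iota 0 n).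

Definition fps_lim (F : nat -> fps C) : fps C := fun k => limn (fun N => F N k).
Definition fps_series (F : nat -> fps C) : fps C :=
  fps_lim (fun N k => \sum_(n < N) F n k).

(* (x z; q)_n = prod_{j<n} (1 - x q^j z) as a formal power series in z *)
Definition qpoch_z (x q : C) (n : nat) : fps C :=
  fps_prod n (fun j => fps_sub (fps_const 1) (fps_scale (x * q ^+ j) (fps_Xn 1))).
(* (x z; q)_oo as a formal power series in z (coefficientwise limit) *)
Definition qpoch_z_inf (x q : C) : fps C := fps_lim (qpoch_z x q).
Definition qpoch (x q : C) (n : nat) : C := \prod_(j < n) (1 - x * q ^+ j).

Definition Gtilde (q : C) (t : nat -> C) (alpha beta : C) : fps C :=
  fps_series (fun n => fps_scale (t n)
    (fps_mul (fps_Xn n) (fps_div (qpoch_z alpha q n) (qpoch_z beta q n)))).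
End FPS.

(* Main.v *)
Require Import Defs.
From HB Require Import structures.
From mathcomp Require Import all_boot all_order all_algebra.
From mathcomp Require Import complex.
From mathcomp Require Import all_classical all_reals topology normedtype sequences.
From mathcomp Require Import ring zify.
Set Implicit Arguments. Unset Strict Implicit. Unset Printing Implicit Defensive.
Import Order.TTheory GRing.Theory Num.Theory.
Import numFieldNormedType.Exports.
Local Open Scope classical_set_scope.
Local Open Scope ring_scope.

Section FpsRing.
Variable C : numFieldType.
Implicit Types (f g h : fps C) (c d : C).

HB.instance Definition _ := Choice.copy (fps C) (nat -> C).

Definition fps0 : fps C := fun _ => 0.
Definition fps_opp f : fps C := fun k => - f k.

Lemma fps_addA : associative (@fps_add C).
Proof. by move=> f g h; apply/funext=> k; rewrite /fps_add addrA. Qed.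
Lemma fps_addC : commutative (@fps_add C).
Proof. by move=> f g; apply/funext=> k; rewrite /fps_add addrC. Qed.
Lemma fps_add0 : left_id fps0 (@fps_add C).
Proof. by move=> f; apply/funext=> k; rewrite /fps_add add0r. Qed.
Lemma fps_addN : left_inverse fps0 fps_opp (@fps_add C).
Proof. by move=> f; apply/funext=> k; rewrite /fps_add /fps_opp addNr. Qed.

HB.instance Definition _ := GRing.isZmodule.Build (fps C)
  fps_addA fps_addC fps_add0 fps_addN.

Lemma fps_mulC : commutative (@fps_mul C).
Proof.
move=> f g; apply/funext=> k; rewrite /fps_mul.
rewrite (reindex_inj rev_ord_inj) /=; apply: eq_bigr => i _.
by rewrite subKn ?leq_ord // mulrC.
Qed.

Lemma fps_mul_rev (f g : fps C) k : fps_mul f g k =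
   \sum_(j < k.+1) f (k - j)%N * g j.
Proof.
rewrite /fps_mul (reindex_inj rev_ord_inj) /=; apply: eq_bigr => j _.
by rewrite subKn ?leq_ord.
Qed.

Lemma fps_mulA : associative (@fps_mul C).
Proof.
move=> p q r; apply/funext=> i.
rewrite [in RHS]fps_mul_rev.
rewrite {1}/fps_mul.
pose coef3 j k := p j * (q (i - j - k)%N * r k).
transitivity (\sum_(j < i.+1) \sum_(k < i.+1 | (k <= i - j)%N) coef3 j k).
  apply: eq_bigr => /= j _; rewrite fps_mul_rev big_distrr /=.
  by rewrite (big_ord_narrow_leq (leq_subr _ _)).
rewrite (exchange_big_dep predT) //=; apply: eq_bigr => k _.
transitivity (\sum_(j < i.+1 | (j <= i - k)%N) coef3 j k).
  apply: eq_bigl => j; rewrite -ltnS -(ltnS j) -!subSn ?leq_ord //.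
  by rewrite -subn_gt0 -(subn_gt0 j) -!subnDA addnC.
rewrite (big_ord_narrow_leq (leq_subr _ _)) /fps_mul big_distrl /=.
by apply: eq_bigr => j _; rewrite /coef3 -!subnDA addnC mulrA.
Qed.

Lemma fps_mul1 : left_id (fps_const 1) (@fps_mul C).
Proof.
move=> f; apply/funext=> k; rewrite /fps_mul big_ord_recl /= /fps_const /=.
rewrite mul1r subn0 big1 ?addr0 // => i _; by rewrite mul0r.
Qed.

Lemma fps_mulDl : left_distributive (@fps_mul C) (@fps_add C).
Proof.
move=> f g h; apply/funext=> k; rewrite /fps_mul /fps_add -big_split /=.
by apply: eq_bigr => i _; rewrite mulrDl.
Qed.

Lemma fps_one_neq0 : fps_const 1 != fps0 :> fps C.
Proof.
apply/eqP => /(congr1 (fun f => f 0%N)); rewrite /fps_const /fps0 /=.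
by move/eqP; rewrite oner_eq0.
Qed.

HB.instance Definition _ := GRing.Zmodule_isComNzRing.Build (fps C)
  fps_mulA fps_mulC fps_mul1 fps_mulDl fps_one_neq0.


Lemma fps_inv_aux_size f n : size (fps_inv_aux f n) = n.+1.
Proof. by elim: n => //= n IH; rewrite size_rcons IH. Qed.

Lemma fps_inv_aux_nth f n i : (i <= n)%N -> nth 0 (fps_inv_aux f n) i = fps_inv f i.
Proof.
elim: n => [|n IH]; first by rewrite leqn0 => /eqP ->.
rewrite leq_eqVlt => /orP [/eqP -> //|]; rewrite ltnS => lein.
by rewrite /= nth_rcons fps_inv_aux_size ltnS lein IH.
Qed.

Lemma fps_invS f n : fps_inv f n.+1 =
  - (f 0%N)^-1 * \sum_(i < n.+1) f i.+1 * fps_inv f (n - i)%N.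
Proof.
rewrite /fps_inv /= nth_rcons fps_inv_aux_size ltnn eqxx; congr (_ * _).
by apply: eq_bigr => i _; rewrite fps_inv_aux_nth // leq_subr.
Qed.

Lemma fps_mulE f g : fps_mul f g = f * g. Proof. by []. Qed.
Lemma fps_addE f g : fps_add f g = f + g. Proof. by []. Qed.
Lemma fps_subE f g : fps_sub f g = f - g. Proof. by []. Qed.
Lemma fps_oneE : fps_const 1 = 1 :> fps C. Proof. by []. Qed.
Lemma fps_zeroE : (0 : fps C) = fun _ => 0. Proof. by []. Qed.
Lemma fcD f g k : (f + g) k = f k + g k. Proof. by []. Qed.
Lemma fcB f g k : (f - g) k = f k - g k. Proof. by []. Qed.
Lemma fcN f k : (- f) k = - f k. Proof. by []. Qed.
Lemma fc0 k : (0 : fps C) k = 0. Proof. by []. Qed.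
Lemma fc1 k : (1 : fps C) k = if k == 0%N then 1 else 0. Proof. by []. Qed.
Lemma fcM f g k : (f * g) k = \sum_(i < k.+1) f i * g (k - i)%N. Proof. by []. Qed.
Lemma fcM0 f g : (f * g) 0%N = f 0%N * g 0%N.
Proof. by rewrite fcM big_ord1. Qed.

Lemma fc_sum I (r : seq I) (P : pred I) (F : I -> fps C) k :
  (\sum_(i <- r | P i) F i) k = \sum_(i <- r | P i) F i k.
Proof.
by elim/big_rec2: _ => // i y1 y2 _ <-.
Qed.

Lemma fps_inv_mul f : f 0%N != 0 -> fps_inv f * f = 1.
Proof.
move=> f0; apply/funext => k; rewrite mulrC fcM fc1.
case: k => [|n]; first by rewrite big_ord1 /fps_inv /= divff.
rewrite big_ord_recl /= subn0 fps_invS.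
under eq_bigr do rewrite subSS.
by rewrite mulrA mulrN divff // mulN1r addNr.
Qed.

Definition fps_unit : {pred fps C} := fun f => f 0%N != 0.
Definition fps_invr f : fps C := if f 0%N != 0 then fps_inv f else f.

Lemma fps_mulVr : {in fps_unit, left_inverse 1 fps_invr *%R}.
Proof. move=> f; rewrite unfold_in /fps_unit /fps_invr => uf; rewrite uf; exact: fps_inv_mul. Qed.

Lemma fps_unitPl f g : g * f = 1 -> fps_unit f.
Proof.
move=> /(congr1 (fun h => h 0%N)); rewrite fcM0 fc1 /= /fps_unit => E.
by apply/eqP => f0; move: E; rewrite f0 mulr0 => /eqP; rewrite eq_sym oner_eq0.
Qed.

Lemma fps_invr_out : {in [predC fps_unit], fps_invr =1 id}.
Proof. by move=> f; rewrite unfold_in /= unfold_in /fps_invr /= => /negbTE ->. Qed.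

HB.instance Definition _ := GRing.ComNzRing_hasMulInverse.Build (fps C)
  fps_mulVr fps_unitPl fps_invr_out.

Lemma fps_unitE f : (f \is a GRing.unit) = (f 0%N != 0). Proof. by []. Qed.

Lemma fps_divE f g : g 0%N != 0 -> fps_div f g = f / g.
Proof. by move=> g0; rewrite /fps_div /GRing.inv /= /fps_invr g0. Qed.

Lemma fps_const_is_additive : additive (@fps_const C).
Proof.
move=> x y; apply/funext => k; rewrite /fps_const fcB.
by case: eqP => _; rewrite ?subrr.
Qed.

Lemma fcCM c f k : (fps_const c * f) k = c * f k.
Proof.
rewrite fcM big_ord_recl /= {1}/fps_const /= subn0 big1 ?addr0 //.
by move=> i _; rewrite /fps_const /= mul0r.
Qed.

Lemma fps_const_is_multiplicative : multiplicative (@fps_const C).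
Proof.
split => // x y; apply/funext => k; rewrite fcCM /fps_const.
by case: eqP; rewrite ?mulr0.
Qed.

HB.instance Definition _ := GRing.isAdditive.Build C (fps C) (@fps_const C)
  fps_const_is_additive.
HB.instance Definition _ := GRing.isMultiplicative.Build C (fps C) (@fps_const C)
  fps_const_is_multiplicative.

Lemma fps_scaleE c f : fps_scale c f = fps_const c * f.
Proof. by apply/funext => k; rewrite fcCM. Qed.

Lemma fcC c k : fps_const c k = if k == 0%N then c else 0. Proof. by []. Qed.

Definition X : fps C := fps_Xn C 1.

Lemma fcXM f k : (X * f) k = if k is k'.+1 then f k' else 0.
Proof.
rewrite fcM; case: k => [|k].
  by rewrite big_ord1 /X /fps_Xn /= mul0r.
rewrite big_ord_recl /X /fps_Xn /= mul0r add0r big_ord_recl /= subSS subn0 mul1r.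
by rewrite big1 ?addr0 // => i _; rewrite /bump /= mul0r.
Qed.

Lemma fcXnM n f k : (X ^+ n * f) k = if (n <= k)%N then f (k - n)%N else 0.
Proof.
elim: n k => [|n IH] k; first by rewrite expr0 mul1r subn0.
rewrite exprS -mulrA fcXM; case: k => [|k] //; by rewrite IH ltnS subSS.
Qed.

Lemma fps_XnE n : fps_Xn C n = X ^+ n.
Proof.
apply/funext => k; rewrite -[X ^+ n]mulr1 fcXnM fc1 /fps_Xn.
case: (leqP n k) => [le|lt]; first by rewrite subn_eq0 eqn_leq le andbT.
by rewrite (ltn_eqF lt).
Qed.

Lemma fps_subst_is_additive c : additive (@fps_subst C c).
Proof. by move=> f g; apply/funext => k; rewrite /fps_subst fcB mulrBr. Qed.

Lemma fps_subst_is_multiplicative c : multiplicative (@fps_subst C c).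
Proof.
split.
  move=> f g; apply/funext => k; rewrite /fps_subst !fcM big_distrr /=.
  apply: eq_bigr => i _; rewrite mulrACA -exprD subnKC //.
  by rewrite -ltnS.
by apply/funext => k; rewrite /fps_subst fc1; case: eqP => [->|]; rewrite ?mulr0 ?expr0 ?mulr1.
Qed.

HB.instance Definition _ c := GRing.isAdditive.Build (fps C) (fps C) (@fps_subst C c)
  (fps_subst_is_additive c).
HB.instance Definition _ c := GRing.isMultiplicative.Build (fps C) (fps C) (@fps_subst C c)
  (fps_subst_is_multiplicative c).

Lemma fps_substB c f g : fps_subst c (f - g) = fps_subst c f - fps_subst c g.
Proof. exact: fps_subst_is_additive. Qed.
Lemma fps_substD c f g : fps_subst c (f + g) = fps_subst c f + fps_subst c g.
Proof. by apply/funext => k; rewrite /fps_subst fcD mulrDr. Qed.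
Lemma fps_substMul c f g : fps_subst c (f * g) = fps_subst c f * fps_subst c g.
Proof. by case: (fps_subst_is_multiplicative c). Qed.
Lemma fps_subst_one c : fps_subst c 1 = 1.
Proof. by case: (fps_subst_is_multiplicative c). Qed.
Lemma fps_subst_prod c (I : Type) (r : seq I) (P : pred I) (F : I -> fps C) :
  fps_subst c (\prod_(j <- r | P j) F j) = \prod_(j <- r | P j) fps_subst c (F j).
Proof. exact: (big_morph _ (fps_substMul c) (fps_subst_one c)). Qed.

Lemma fps_substC c d : fps_subst c (fps_const d) = fps_const d.
Proof.
by apply/funext => k; rewrite /fps_subst /fps_const; case: eqP => [->|]; rewrite ?mulr0 ?expr0 ?mul1r.
Qed.

Lemma fps_substX c : fps_subst c X = fps_const c * X.
Proof.
apply/funext => k; rewrite fcCM /fps_subst /X /fps_Xn.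
by case: eqP => [->|]; rewrite ?mulr0 ?expr1.
Qed.

Lemma fps_substXn c n : fps_subst c (X ^+ n) = fps_const (c ^+ n) * X ^+ n.
Proof.
apply/funext => k; rewrite fcCM /fps_subst -fps_XnE /fps_Xn.
by case: eqP => [->|]; rewrite ?mulr0.
Qed.

Lemma fps_substM c d f : fps_subst c (fps_subst d f) = fps_subst (c * d) f.
Proof. by apply/funext => k; rewrite /fps_subst mulrA exprMn. Qed.

Lemma fps_subst1 f : fps_subst 1 f = f.
Proof. by apply/funext => k; rewrite /fps_subst expr1n mul1r. Qed.

Lemma fps_subst0 c f : fps_subst c f 0%N = f 0%N.
Proof. by rewrite /fps_subst expr0 mul1r. Qed.

Lemma fps_substV c f : f 0%N != 0 -> fps_subst c (f^-1) = (fps_subst c f)^-1.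
Proof.
move=> f0; apply: (@mulIr _ (fps_subst c f)); first by rewrite fps_unitE fps_subst0.
by rewrite -rmorphM !mulVr ?rmorph1 // fps_unitE ?fps_subst0.
Qed.

End FpsRing.


Section Series.
Variable C : numFieldType.
Implicit Types (f g h : fps C) (c d : C) (F G : nat -> fps C).

Definition ordge n f := forall k, (k < n)%N -> f k = 0.

Lemma ordge_mull n f g : ordge n f -> ordge n (g * f).
Proof.
move=> o k lt; rewrite fcM big1 // => i _; rewrite o ?mulr0 //.
exact: leq_ltn_trans (leq_subr _ _) lt.
Qed.
Lemma ordge_mulr n f g : ordge n f -> ordge n (f * g).
Proof. by rewrite mulrC; apply: ordge_mull. Qed.
Lemma ordge_Xn n : ordge n (X C ^+ n).
Proof. by move=> k lt; rewrite -[X C ^+ n]mulr1 fcXnM leqNgt lt. Qed.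
Lemma ordge_add n f g : ordge n f -> ordge n g -> ordge n (f + g).
Proof. by move=> o1 o2 k lt; rewrite fcD o1 ?o2 ?addr0. Qed.
Lemma ordge_sub n f g : ordge n f -> ordge n g -> ordge n (f - g).
Proof. by move=> o1 o2 k lt; rewrite fcB o1 ?o2 ?subr0. Qed.
Lemma ordge_subst n c f : ordge n f -> ordge n (fps_subst c f).
Proof. by move=> o k lt; rewrite /fps_subst o ?mulr0. Qed.
Lemma ordge_le m n f : (m <= n)%N -> ordge n f -> ordge m f.
Proof. by move=> le o k lt; apply: o; exact: leq_trans lt le. Qed.
Lemma ordge0 f : ordge 0 f. Proof. by []. Qed.

Definition ordseq (F : nat -> fps C) := forall n, ordge n (F n).

Lemma seriesEN F k N : ordseq F -> (k < N)%N ->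
  fps_series F k = \sum_(n < N) F n k.
Proof.
move=> o ltN; rewrite /fps_series /fps_lim.
apply: (lim_near_cst (@norm_hausdorff _ _)).
have E : forall M, (k < M)%N -> \sum_(n < M) F n k = \sum_(n < k.+1) F n k.
  move=> M leM.
  rewrite -(subnKC leM) big_split_ord /= [X in _ + X]big1 ?addr0 // => i _.
  by apply: o; rewrite /= ltnS leq_addr.
exists k.+1 => // M /= leM; by rewrite E // E.
Qed.

Lemma seriesE F k : ordseq F -> fps_series F k = \sum_(n < k.+1) F n k.
Proof. by move=> o; apply: seriesEN. Qed.

Lemma series_ext F G : (forall n, F n = G n) -> fps_series F = fps_series G.
Proof. by move=> e; congr fps_series; apply/funext. Qed.

Lemma series_mull f F : ordseq F ->
  f * fps_series F = fps_series (fun n => f * F n).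
Proof.
move=> o; apply/funext => k; rewrite seriesE; last by move=> n; apply: ordge_mull.
rewrite fcM.
under eq_bigr => i _ do rewrite (@seriesEN F _ k.+1) // ?ltnS ?leq_subr // big_distrr /=.
rewrite exchange_big /=; apply: eq_bigr => n _; by rewrite fcM.
Qed.

Lemma series_add F G : ordseq F -> ordseq G ->
  fps_series (fun n => F n + G n) = fps_series F + fps_series G.
Proof.
move=> oF oG; apply/funext => k; rewrite fcD !seriesE //; last first.
  by move=> n; apply: ordge_add.
by rewrite -big_split.
Qed.

Lemma series_sub F G : ordseq F -> ordseq G ->
  fps_series (fun n => F n - G n) = fps_series F - fps_series G.
Proof.
move=> oF oG; apply/funext => k; rewrite fcB !seriesE //; last first.
  by move=> n; apply: ordge_sub.
by rewrite -sumrB.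
Qed.

Lemma series_subst c F : ordseq F ->
  fps_subst c (fps_series F) = fps_series (fun n => fps_subst c (F n)).
Proof.
move=> o; apply/funext => k; rewrite /fps_subst !seriesE //; last first.
  by move=> n; apply: ordge_subst.
by rewrite big_distrr.
Qed.

Lemma series_exchange (A : nat -> nat -> fps C) :
  (forall n m, ordge (n + m) (A n m)) ->
  fps_series (fun n => fps_series (fun m => A n m)) =
  fps_series (fun m => fps_series (fun n => A n m)).
Proof.
move=> o.
have o1 : forall n, ordseq (fun m => A n m).
  by move=> n m; apply: ordge_le (o n m); apply: leq_addl.
have o2 : forall m, ordseq (fun n => A n m).
  by move=> m n; apply: ordge_le (o n m); apply: leq_addr.
have o3 : ordseq (fun n => fps_series (fun m => A n m)).
  by move=> n k lt; rewrite seriesE // big1 // => m _; apply: (o n m); apply: leq_trans lt (leq_addr _ _).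
have o4 : ordseq (fun m => fps_series (fun n => A n m)).
  by move=> m k lt; rewrite seriesE // big1 // => n _; apply: (o n m); apply: leq_trans lt (leq_addl _ _).
apply/funext => k; rewrite !seriesE //.
under eq_bigr => n _ do rewrite (@seriesEN _ k k.+1) //.
rewrite exchange_big /=; apply: eq_bigr => m _.
by rewrite (@seriesEN _ k k.+1).
Qed.

Lemma series_telescope (D : nat -> fps C) : ordseq D ->
  fps_series (fun n => D n - D n.+1) = D 0%N.
Proof.
move=> o; apply/funext => k; rewrite seriesE; last first.
  by move=> n; apply: ordge_sub => //; apply: ordge_le (o n.+1); apply: leqnSn.
suff -> : forall N, \sum_(n < N) (D n - D n.+1) k = D 0%N k - D N k.
  by rewrite (o k.+1) ?subr0.
elim => [|N IH]; first by rewrite big_ord0 subrr.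
by rewrite big_ord_recr /= IH fcB addrA subrK.
Qed.

Lemma series_coef (t : nat -> C) :
  (t : fps C) = fps_series (fun m => fps_const (t m) * X C ^+ m).
Proof.
have o : ordseq (fun m => fps_const (t m) * X C ^+ m).
  by move=> n; apply: ordge_mull; apply: ordge_Xn.
apply/funext => k; rewrite seriesE //.
rewrite (bigD1 (ord_max)) //= big1 ?addr0.
  by rewrite mulrC fcXnM leqnn subnn fcC eqxx.
move=> i /eqP ne; rewrite mulrC fcXnM.
case: leqP => // le; rewrite fcC; case: eqP => // /eqP; rewrite subn_eq0 => ki.
exfalso; apply: ne; apply: val_inj => /=; apply/eqP.
by rewrite eqn_leq ki -ltnS ltn_ord.
Qed.

End Series.


Section Qpoch.
Variable C : numFieldType.
Implicit Types (f g h : fps C) (c d x : C).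
Variable q : C.
Local Notation X := (X C).

Definition pz x n : fps C := \prod_(j < n) (1 - fps_const (x * q ^+ j) * X).

Lemma qpoch_zE x n : qpoch_z x q n = pz x n.
Proof.
rewrite /qpoch_z /fps_prod /pz; rewrite -(big_mkord (fun _ => true) (fun j => 1 - fps_const (x * q ^+ j) * X)) /index_iota subn0.
elim: (iota 0 n) => [|j r IH]; first by rewrite big_nil.
by rewrite big_cons /= IH fps_mulE fps_subE fps_scaleE.
Qed.

Lemma pz0 x n : pz x n 0%N = 1.
Proof.
elim: n => [|n IH]; first by rewrite /pz big_ord0.
rewrite /pz big_ord_recr /= fcM0 -/(pz x n) IH mul1r fcB fcCM /X /fps_Xn /=.
by rewrite mulr0 subr0.
Qed.

Lemma pz_unit x n : pz x n \is a GRing.unit.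
Proof. by rewrite fps_unitE pz0 oner_eq0. Qed.

Lemma subst_lin c x : fps_subst c (1 - fps_const x * X) = 1 - fps_const (x * c) * X.
Proof. by rewrite fps_substB fps_subst_one fps_substMul fps_substC fps_substX mulrA rmorphM. Qed.

Lemma pz_one x : pz x 1 = 1 - fps_const x * X.
Proof. by rewrite /pz big_ord1 expr0 mulr1. Qed.

Lemma pz_split x n m : pz x (n + m) = pz x n * fps_subst (q ^+ n) (pz x m).
Proof.
rewrite /pz big_split_ord /= fps_subst_prod; congr (_ * _).
apply: eq_bigr => j _; rewrite subst_lin; congr (1 - fps_const _ * X).
rewrite exprD; ring.
Qed.

Lemma pz_rec x n : pz x n.+1 = (1 - fps_const x * X) * fps_subst q (pz x n).
Proof.
by rewrite -add1n pz_split expr1 /pz big_ord1 expr0 mulr1.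
Qed.

Lemma pz_recr x n : pz x n.+1 = pz x n * (1 - fps_const (x * q ^+ n) * X).
Proof. by rewrite /pz big_ord_recr. Qed.

Lemma fc_lin_mul c f k :
  ((1 - fps_const c * X) * f) k = if k is k'.+1 then f k - c * f k' else f k.
Proof.
rewrite mulrBl mul1r fcB -mulrA fcCM fcXM.
by case: k => [|k]; rewrite ?mulr0 ?subr0.
Qed.

Lemma pz_coef_rel x N k :
  (1 - q ^+ k.+1) * pz x N k.+1 = x * (q ^+ N - q ^+ k) * pz x N k.
Proof.
have := congr1 (fun f => f k.+1) (pz_rec x N).
rewrite pz_recr mulrC fc_lin_mul fc_lin_mul /fps_subst => E.
have : pz x N k.+1 - x * q ^+ N * pz x N k =
   q ^+ k.+1 * pz x N k.+1 - x * (q ^+ k * pz x N k) by [].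
move=> E2; apply: (@subIr _ (x * q ^+ N * pz x N k)).
rewrite mulrBl mul1r.
suff : pz x N k.+1 - x * q ^+ N * pz x N k = q ^+ k.+1 * pz x N k.+1 - x * (q ^+ k * pz x N k).
  move=> E3; rewrite -[LHS]opprK; apply/eqP; rewrite -subr_eq0; apply/eqP.
  move: E3; move/eqP; rewrite -subr_eq0 => /eqP E3; rewrite -E3. ring.
exact: E2.
Qed.

Section Lim.
Hypothesis Hq : (fun N => q ^+ N) @ \oo --> (0 : C).
Hypothesis Hq1 : forall k, q ^+ k.+1 != 1.

Lemma dnz k : 1 - q ^+ k.+1 != 0.
Proof. by rewrite subr_eq0 eq_sym Hq1. Qed.

Fixpoint Linf x k := if k is k'.+1 then - x * q ^+ k' / (1 - q ^+ k'.+1) * Linf x k' else 1.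

Lemma pz_cvg x k : (fun N => pz x N k) @ \oo --> Linf x k.
Proof.
elim: k => [|k IH].
  have -> : (fun N => pz x N 0%N) = (fun _ => 1) by apply/funext => N; rewrite pz0.
  exact: cvg_cst.
have -> : (fun N => pz x N k.+1) =
   (fun N => x * (q ^+ N - q ^+ k) / (1 - q ^+ k.+1) * pz x N k).
  apply/funext => N; apply: (mulfI (dnz k)); rewrite pz_coef_rel.
  by field; apply: dnz.
have -> : Linf x k.+1 = x * (0 - q ^+ k) / (1 - q ^+ k.+1) * Linf x k.
  by rewrite /= sub0r mulrN mulNr.
apply: cvgM => //.
apply: cvgMr_tmp; apply: cvgMl_tmp; apply: cvgB => //; exact: cvg_cst.
Qed.

Lemma qinfE x : qpoch_z_inf x q = Linf x.
Proof.
apply/funext => k; rewrite /qpoch_z_inf /fps_lim.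
have -> : (fun N => qpoch_z x q N k) = (fun N => pz x N k).
  by apply/funext => N; rewrite qpoch_zE.
apply: cvg_lim; last exact: pz_cvg. exact: norm_hausdorff.
Qed.

Lemma Linf0 x : Linf x 0%N = 1. Proof. by []. Qed.

Lemma Linf_rec x : (Linf x : fps C) = (1 - fps_const x * X) * fps_subst q (Linf x).
Proof.
apply/funext => k; rewrite fc_lin_mul /fps_subst.
case: k => [|k]; first by rewrite expr0 mul1r.
rewrite [Linf x k.+1]/=; have := dnz k; move: (Linf x k) => L d.
by field.
Qed.

End Lim.

End Qpoch.


Section Main1.
Variable C : numFieldType.
Implicit Types (f g h : fps C) (c d x y : C).
Variable q : C.
Hypothesis Hq1 : forall k, q ^+ k.+1 != 1.
Local Notation X := (X C).
Local Notation pz := (pz q).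

Lemma fps_inv0 f : f \is a GRing.unit -> (f^-1) 0%N = (f 0%N)^-1.
Proof.
move=> u; have := congr1 (fun g => g 0%N) (mulVr u); rewrite fcM0 fc1 /= => E.
have f0 : f 0%N != 0 by [].
by apply: (mulIf f0); rewrite E mulVf.
Qed.

Lemma unit_lin c : (1 - fps_const c * X) \is a GRing.unit.
Proof. by rewrite fps_unitE fcB fcCM /X /fps_Xn /= mulr0 subr0 oner_eq0. Qed.

Lemma unit_subst c f : f \is a GRing.unit -> fps_subst c f \is a GRing.unit.
Proof. by rewrite !fps_unitE fps_subst0. Qed.

Definition ra x y n : fps C := pz x n * (pz y n)^-1.

Lemma ra_split x y n m : ra x y (n + m) = ra x y n * fps_subst (q ^+ n) (ra x y m).
Proof.
rewrite /ra !pz_split fps_substMul fps_substV ?pz0 ?oner_eq0 //.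
rewrite invrM ?pz_unit ?unit_subst ?pz_unit //.
ring.
Qed.

Lemma ra0 x y n : ra x y n 0%N = 1.
Proof. by rewrite /ra fcM0 fps_inv0 ?pz_unit // !pz0 invr1 mulr1. Qed.

Lemma ra_zero x y : ra x y 0 = 1.
Proof. by rewrite /ra /pz !big_ord0 invr1 mulr1. Qed.

Lemma qde_uniq a b f g :
  (1 - fps_const b * X) * f = (1 - fps_const a * X) * fps_subst q f ->
  (1 - fps_const b * X) * g = (1 - fps_const a * X) * fps_subst q g ->
  f 0%N = g 0%N -> f = g.
Proof.
move=> Ef Eg E0.
have Eh : (1 - fps_const b * X) * (f - g) = (1 - fps_const a * X) * fps_subst q (f - g).
  by rewrite fps_substB !mulrBr Ef Eg.
apply/eqP; rewrite -subr_eq0; apply/eqP; move: Eh.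
have : (f - g) 0%N = 0 by rewrite fcB E0 subrr.
move: (f - g) => h h0 Eh; apply/funext.
elim => [|k IH]; first by rewrite h0.
have := congr1 (fun u => u k.+1) Eh; rewrite !fc_lin_mul /fps_subst IH !mulr0 subr0.
rewrite subr0 => /eqP; rewrite -subr_eq0 -{1}[h k.+1]mul1r -mulrBl mulf_eq0.
by rewrite subr_eq0 eq_sym (negbTE (Hq1 k)) /= => /eqP.
Qed.


Lemma pz1 x : pz x 1 = 1 - fps_const x * X.
Proof. exact: pz_one. Qed.

Lemma ra_rec x y n :
  ra x y n.+1 * (1 - fps_const y * X) = (1 - fps_const x * X) * fps_subst q (ra x y n).
Proof.
rewrite -add1n ra_split expr1 /ra !pz1.
set S := fps_subst q _.
have hw := mulrV (unit_lin y).
transitivity ((1 - fps_const y * X) * (1 - fps_const y * X)^-1 * ((1 - fps_const x * X) * S)).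
  ring.
by rewrite hw mul1r.
Qed.

Lemma pz_inv_split y n :
  (pz y n)^-1 = (1 - fps_const (y * q ^+ n) * X) * (pz y n.+1)^-1.
Proof.
by rewrite pz_recr invrM ?pz_unit ?unit_lin // mulrA mulrV ?unit_lin // mul1r.
Qed.

Section Main2.
Variables a b : C.
Hypothesis Hb : b != 0.

Definition Kc n := qpoch (a * q / b) q n / qpoch q q n * b ^+ n * q ^+ (n * n.-1).

Lemma qpochS x n : qpoch x q n.+1 = qpoch x q n * (1 - x * q ^+ n).
Proof. by rewrite /qpoch big_ord_recr. Qed.

Lemma qpoch_qq_neq0 n : qpoch q q n != 0.
Proof.
rewrite /qpoch; apply/prodf_neq0 => i _.
by rewrite -exprS subr_eq0 eq_sym Hq1.
Qed.

Lemma Kc_rec n : Kc n.+1 * (1 - q ^+ n.+1) = Kc n * (b - a * q ^+ n.+1) * (q ^+ n * q ^+ n).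
Proof.
rewrite /Kc !qpochS.
have -> : (n.+1 * n.+1.-1 = n * n.-1 + n + n)%N by case: n => // n; rewrite /=; lia.
rewrite !exprD exprS.
have h1 := qpoch_qq_neq0 n.
have h2 : 1 - q * q ^+ n != 0 by rewrite -exprS subr_eq0 eq_sym Hq1.
move: h1 h2; rewrite -exprS => h1 h2.
rewrite exprS in h2 *. move: h1 h2; move: (qpoch (a * q / b) q n) (qpoch q q n) (q ^+ n) (q ^+ (n * n.-1)) (b ^+ n) => A B u Q bn h1 h2. by field; rewrite h1 h2 Hb.
Qed.

Definition T n := X ^+ n * (fps_const (Kc n) *
   (ra a b n * (1 - fps_const (a * q ^+ (2 * n)) * X))).
Definition T' n := X ^+ n * (fps_const (Kc n * q ^+ n) *
   (ra a b n.+1 * (1 - fps_const (a * q ^+ (2 * n) * q) * X))).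
Definition D n := X ^+ n * (fps_const (Kc n * (1 - q ^+ n)) * ra a b n).

Lemma q2n n : q ^+ (2 * n) = q ^+ n * q ^+ n.
Proof. by rewrite mul2n -addnn exprD. Qed.

Lemma tele n : T n - T' n = D n - D n.+1.
Proof.
rewrite /T /T' /D.
have E2 : ra a b n.+1 = pz a n * (pz b n.+1)^-1 * (1 - fps_const (a * q ^+ n) * X).
  by rewrite /ra pz_recr; ring.
have E1 : ra a b n = pz a n * (pz b n.+1)^-1 * (1 - fps_const (b * q ^+ n) * X).
  by rewrite /ra pz_inv_split; ring.
rewrite E2 E1 Kc_rec q2n !exprSr.
move: (pz a n * _) (Kc n) (q ^+ n) => V K u.
ring.
Qed.

Lemma ordT : ordseq T. Proof. by move=> n; apply: ordge_mulr; apply: ordge_Xn. Qed.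
Lemma ordT' : ordseq T'. Proof. by move=> n; apply: ordge_mulr; apply: ordge_Xn. Qed.
Lemma ordD : ordseq D. Proof. by move=> n; apply: ordge_mulr; apply: ordge_Xn. Qed.

Lemma F_eq : fps_series T = fps_series T'.
Proof.
apply/eqP; rewrite -subr_eq0 -series_sub; [|exact: ordT|exact: ordT'].
rewrite (series_ext tele) series_telescope; last exact: ordD.
by rewrite /D expr0 subrr mulr0 rmorph0 mul0r mulr0.
Qed.

Lemma F_rec : (1 - fps_const b * X) * fps_series T =
  (1 - fps_const a * X) * fps_subst q (fps_series T).
Proof.
rewrite {1}F_eq series_mull; last exact: ordT'.
rewrite series_subst; last exact: ordT.
rewrite series_mull; last first.
  by move=> n; apply: ordge_subst; apply: ordT.
apply: series_ext => n; rewrite /T /T'.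
have E := ra_rec a b n.
set S := fps_subst q (ra a b n) in E.
rewrite fps_substMul fps_substXn fps_substMul fps_substC fps_substMul -/S.
rewrite fps_substB fps_subst_one fps_substMul fps_substC fps_substX.
transitivity (X ^+ n * fps_const (Kc n * q ^+ n) *
   (1 - fps_const (a * q ^+ (2 * n) * q) * X) * (ra a b n.+1 * (1 - fps_const b * X))).
  ring.
rewrite E; ring.
Qed.

Lemma Kc0 : Kc 0 = 1.
Proof. by rewrite /Kc /qpoch !big_ord0 invr1 !mulr1. Qed.

Lemma F0 : fps_series T 0%N = 1.
Proof.
rewrite seriesE; last exact: ordT.
rewrite big_ord1 /T expr0 mul1r !fcM0 fcC /= ra0 fcB fc1 fcCM /=.
by rewrite /X /fps_Xn /= mulr0 subr0 Kc0 !mulr1.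
Qed.

Definition H : fps C := (Linf q a : fps C) * (Linf q b : fps C)^-1.

Lemma Linf_unit x : (Linf q x : fps C) \is a GRing.unit.
Proof. by rewrite fps_unitE Linf0 oner_eq0. Qed.

Lemma H_rec : (1 - fps_const b * X) * H = (1 - fps_const a * X) * fps_subst q H.
Proof.
rewrite /H fps_substMul fps_substV; last by rewrite Linf0 oner_eq0.
set sA := fps_subst q (Linf q a); set sB := fps_subst q (Linf q b).
have EA : (Linf q a : fps C) = (1 - fps_const a * X) * sA by apply: Linf_rec.
have EB : (Linf q b : fps C) = (1 - fps_const b * X) * sB by apply: Linf_rec.
rewrite {1}EA {1}EB invrM ?unit_lin ?unit_subst ?Linf_unit //.
have hw := mulrV (unit_lin b).
transitivity ((1 - fps_const b * X) * (1 - fps_const b * X)^-1 *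
   ((1 - fps_const a * X) * (sA * sB^-1))); first ring.
by rewrite hw mul1r.
Qed.

Lemma H0 : H 0%N = 1.
Proof. by rewrite /H fcM0 fps_inv0 ?Linf_unit // !Linf0 invr1 mulr1. Qed.

Lemma FH : fps_series T = H.
Proof. by apply: (qde_uniq F_rec H_rec); rewrite F0 H0. Qed.

Lemma H1 : ra a b 1 * fps_subst q H = H.
Proof.
rewrite /ra !pz1.
transitivity ((1 - fps_const b * X)^-1 * ((1 - fps_const a * X) * fps_subst q H)).
  ring.
by rewrite -H_rec mulrA mulVr ?unit_lin // mul1r.
Qed.

Lemma H_shift m : ra a b m * fps_subst (q ^+ m) H = H.
Proof.
elim: m => [|m IH]; first by rewrite ra_zero expr0 fps_subst1 mul1r.
rewrite -addn1 ra_split addn1 exprSr -fps_substM -mulrA -fps_substMul H1.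
exact: IH.
Qed.

End Main2.

End Main1.


Lemma ordge_mulD (C : numFieldType) n m (f g : fps C) :
  ordge n f -> ordge m g -> ordge (n + m) (f * g).
Proof.
move=> hf hg k lt; rewrite fcM big1 // => i _.
case: (ltnP i n) => [lin|lein]; first by rewrite hf ?mul0r.
rewrite hg ?mulr0 //; have := ltn_ord i; lia.
Qed.

Ltac ordtac := first [ exact: ordge_Xn | exact: ordge0
  | (apply: ordge_sub; ordtac) | (apply: ordge_subst; ordtac)
  | (apply: ordge_mull; ordtac) | (apply: ordge_mulr; ordtac)
  | (apply: ordge_mulD; ordtac) ].

Section Assembly.
Variable C : numFieldType.
Variables a b q : C.
Variable t : nat -> C.
Hypothesis Hb : b != 0.
Hypothesis Hq1 : forall k, q ^+ k.+1 != 1.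
Local Notation X := (X C).
Local Notation ra := (ra q).

Lemma GtildeE x y : Gtilde q t x y =
  fps_series (fun m => fps_const (t m) * (X ^+ m * ra x y m)).
Proof.
apply: series_ext => m.
by rewrite fps_scaleE fps_mulE !qpoch_zE fps_divE ?pz0 ?oner_eq0 // fps_XnE.
Qed.

Lemma ra_shift_q n m :
  fps_const (q ^+ m) * fps_subst (q ^+ n.+1) (ra (a / q) (b / q) m) =
  fps_const (q ^+ m) * fps_subst (q ^+ n) (ra a b m).
Proof.
have [->|q0] := eqVneq q 0.
  case: m => [|m]; first by rewrite !ra_zero !fps_subst_one.
  by rewrite expr0n /= rmorph0 !mul0r.
congr (_ * _); rewrite exprSr -fps_substM; congr (fps_subst _ _).
have E : forall x, fps_subst q (pz q (x / q) m) = pz q x m.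
  move=> x; rewrite /pz fps_subst_prod; apply: eq_bigr => j _.
  by rewrite subst_lin; congr (1 - fps_const _ * _); field.
by rewrite /ra fps_substMul fps_substV ?pz0 ?oner_eq0 // !E.
Qed.

Definition B n m := fps_const (Kc q a b n) * (ra a b n * (X ^+ n *
  (fps_subst (q ^+ n) (fps_const (t m) * (X ^+ m * ra a b m)) -
   fps_const (a * q ^+ (2 * n)) * X ^+ 1 *
     fps_subst (q ^+ n.+1) (fps_const (t m) * (X ^+ m * ra (a / q) (b / q) m))))).

Lemma subst_h1 c d k f :
  fps_subst c (fps_const d * (X ^+ k * f)) = fps_const d * (fps_const (c ^+ k) * X ^+ k * fps_subst c f).
Proof. by rewrite fps_substMul fps_substC fps_substMul fps_substXn. Qed.

Lemma subst_h2 c K e k f :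
  fps_subst c (X ^+ k * (fps_const K * (f * (1 - fps_const e * X)))) =
  fps_const (c ^+ k) * X ^+ k * (fps_const K * (fps_subst c f * (1 - fps_const e * (fps_const c * X)))).
Proof.
rewrite fps_substMul fps_substXn fps_substMul fps_substC fps_substMul.
by rewrite fps_substB fps_subst_one fps_substMul fps_substC fps_substX.
Qed.

Lemma B_eq n m : B n m = fps_const (t m) * (X ^+ m * (ra a b m * fps_subst (q ^+ m) (T q a b n))).
Proof.
rewrite /B /T.
rewrite !subst_h1 subst_h2.
set S := fps_subst (q ^+ n) (ra a b m).
set S' := fps_subst (q ^+ n.+1) (ra (a / q) (b / q) m).
set U := fps_subst (q ^+ m) (ra a b n).
have L : fps_const (q ^+ m) * S' = fps_const (q ^+ m) * S by apply: ra_shift_q.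
have RS : ra a b m * U = ra a b n * S by rewrite -!ra_split addnC.
rewrite [q ^+ n.+1]exprSr exprMn [(q ^+ m) ^+ n]exprAC.
apply: (etrans (y := fps_const (Kc q a b n) * fps_const (t m) * fps_const ((q ^+ n) ^+ m) *
  X ^+ n * X ^+ m * (ra a b n * S - fps_const (a * q ^+ (2 * n)) * X * ra a b n *
  (fps_const (q ^+ m) * S')))).
  ring.
rewrite L; symmetry.
apply: (etrans (y := fps_const (Kc q a b n) * fps_const (t m) * fps_const ((q ^+ n) ^+ m) *
  X ^+ n * X ^+ m * (1 - fps_const (a * q ^+ (2 * n)) * (fps_const (q ^+ m) * X)) *
  (ra a b m * U))).
  ring.
rewrite RS; ring.
Qed.

Hypothesis Hq : (fun N => q ^+ N) @ \oo --> (0 : C).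

Lemma term_eq n :
    fps_scale (qpoch (a * q / b) q n / qpoch q q n * b ^+ n * q ^+ (n * n.-1))
      (fps_mul (fps_div (qpoch_z a q n) (qpoch_z b q n))
         (fps_mul (fps_Xn _ n)
            (fps_sub (fps_subst (q ^+ n) (Gtilde q t a b))
               (fps_mul (fps_scale (a * q ^+ (2 * n)) (fps_Xn _ 1))
                  (fps_subst (q ^+ n.+1) (Gtilde q t (a / q) (b / q)))))))
  = fps_series (fun m => B n m).
Proof.
rewrite fps_scaleE !fps_mulE !qpoch_zE fps_divE ?pz0 ?oner_eq0 // fps_subE fps_scaleE.
rewrite !fps_XnE !GtildeE.
rewrite series_subst; last by move=> k; ordtac.
rewrite series_subst; last by move=> k; ordtac.
rewrite series_mull; last by move=> k; ordtac.
rewrite -series_sub; [|by move=> k; ordtac|by move=> k; ordtac].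
rewrite series_mull; last by move=> k; ordtac.
rewrite series_mull; last by move=> k; ordtac.
rewrite series_mull; last by move=> k; ordtac.
by apply: series_ext => m.
Qed.

Lemma main_generic :
  fps_mul (fps_div (qpoch_z_inf a q) (qpoch_z_inf b q)) t =
  fps_series (fun n : nat =>
    fps_scale (qpoch (a * q / b) q n / qpoch q q n * b ^+ n * q ^+ (n * n.-1))
      (fps_mul (fps_div (qpoch_z a q n) (qpoch_z b q n))
         (fps_mul (fps_Xn _ n)
            (fps_sub (fps_subst (q ^+ n) (Gtilde q t a b))
               (fps_mul (fps_scale (a * q ^+ (2 * n)) (fps_Xn _ 1))
                  (fps_subst (q ^+ n.+1) (Gtilde q t (a / q) (b / q)))))))).
Proof.
transitivity (fps_series (fun m => fps_const (t m) * (X ^+ m * H q a b))).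
  rewrite !qinfE // fps_divE ?Linf0 ?oner_eq0 // fps_mulE.
  transitivity (H q a b * fps_series (fun m => fps_const (t m) * X ^+ m)).
    by rewrite -(series_coef t).
  rewrite series_mull; last by move=> k; ordtac.
  by apply: series_ext => m; ring.
symmetry; rewrite (series_ext term_eq) series_exchange; last first.
  by move=> n m; rewrite /B; ordtac.
apply: series_ext => m.
rewrite (series_ext (fun n => B_eq n m)).
rewrite -(H_shift Hq1 a b m) -(FH Hq1 a Hb).
rewrite series_subst; last exact: ordT.
rewrite series_mull; last by move=> k; ordtac.
rewrite series_mull; last by move=> k; ordtac.
rewrite series_mull; last by move=> k; ordtac.
by [].
Qed.

End Assembly.

Local Open Scope complex_scope.

Local Notation Ci R := (Num.NumField.clone R[i] _).
Lemma qpow_cvg0 (R : realType) (q : Ci R) : `|q| < 1 ->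
  (fun N => q ^+ N) @ \oo --> (0 : Ci R).
Proof.
move=> q1.
have [r [r0 r1 qr]] : exists r : R, [/\ 0 <= r, r < 1 & `|q| = r%:C].
  exists (complex.Re `|q|).
  have : `|q| \is Num.real by apply: normr_real.
  move=> /complex_realP [r rE]; rewrite rE /=.
  split => //; first by rewrite -lecR -rE; exact: normr_ge0.
  by rewrite -ltcR -rE; exact: q1.
have cr : (fun N => r ^+ N) @ \oo --> (0 : R).
  by apply: cvg_expr; rewrite ger0_norm.
apply/cvgr0Pnorm_lt => e e0.
have : (0 < complex.Re e)%R by move: e0; rewrite ltcE => /andP [].
move=> /((cvgr0Pnorm_lt _).1 cr).
apply: filterS => N /= HN.
rewrite normrX qr -rmorphXn /=.
move: e0; rewrite !ltcE => /andP [/eqP Ie _] /=; rewrite Ie eqxx /=.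
by apply: le_lt_trans HN; apply: ler_norm.
Qed.

Lemma qpow_neq1 (C : numFieldType) (q : C) : `|q| < 1 -> forall k, q ^+ k.+1 != 1.
Proof.
move=> q1 k; apply/eqP => /(congr1 (@Num.norm _ _)); rewrite normrX normr1 => /eqP.
by rewrite lt_eqF // exprn_ilt1 // normr_ge0.
Qed.


Unset Implicit Arguments.

Theorem theorem1p2 (R : realType) (a b q : R[i]) (t : nat -> R[i]) :
  `|q| < 1 -> b != 0 ->
  let G : fps R[i] := t in
  fps_mul (fps_div (qpoch_z_inf a q) (qpoch_z_inf b q)) G =
  fps_series (fun n : nat =>
    fps_scale (qpoch (a * q / b) q n / qpoch q q n * b ^+ n * q ^+ (n * n.-1))
      (fps_mul (fps_div (qpoch_z a q n) (qpoch_z b q n))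
         (fps_mul (fps_Xn _ n)
            (fps_sub (fps_subst (q ^+ n) (Gtilde q t a b))
               (fps_mul (fps_scale (a * q ^+ (2 * n)) (fps_Xn _ 1))
                  (fps_subst (q ^+ n.+1) (Gtilde q t (a / q) (b / q)))))))).
Proof.
move=> q1 bn0 G.
apply: main_generic => //.
  exact: qpow_neq1.
exact: qpow_cvg0.
Qed.
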